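(* Let an $[[n,k,d;c]]$ EAQEC code be given by a simplified stabilizer group $\mathcal S'=\langle g'_1,\dots,g'_{n-k},h'_1,\dots,h'_c\rangle$ on Alice's $n$ qubits, with isotropic subgroup $\mathcal S_I=\langle g'_{c+1},\dots,g'_{n-k}\rangle$, and let $T$ be a set of syndrome representatives consisting of Pauli operators acting on Alice's qubits only. Over the channel $\mathcal N_A\otimes I_B$, where $\mathcal N_A$ is the depolarizing channel with rate $p_a$ on each of Alice's $n$ qubits and Bob's qubits suffer no error, the channel fidelity is \[ F_C\big(\mathcal D(\mathcal N_A\otimes I_B)\mathcal U\big)=\sum_{w=0}^n b_w q_w, \] where $b_w$ is the number of elements of $T\times\mathcal S_I=\{hg:h\in T,g\in\mathcal S_I\}$ of weight $w$ and $q_w=(1-\frac34p_a)^{n-w}(\frac14p_a)^w$; i.e. it is the weight enumerator of $T\times\mathcal S_I$, a polynomial in $\{q_w\}$.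
   Context: Pauli operators are tensor products of $I,X,Y,Z$ (up to phase); weight is the number of non-identity factors. In the EAQEC code, $g'_i$ and $h'_i$ anticommute for $i\le c$ and all other pairs of generators of $\mathcal S'$ commute. Alice and Bob share $c$ Bell pairs; after Alice's Clifford encoding, the $(n+c)$-qubit encoded state is stabilized by $\mathcal S=\langle g'_i\otimes Z_i,\ h'_i\otimes X_i\ (i\le c),\ g'_j\otimes I\ (j>c)\rangle$ (the $Z_i,X_i$ act on Bob's $i$-th qubit), so the scheme is an $[[n+c,k]]$ stabilizer code with Clifford encoder $U_E$. The syndrome of an error records which generators of $\mathcal S$ it anticommutes with (for an error $E_A\otimes I$ this is the pattern of anticommutation of $E_A$ with the generators of $\mathcal S'$); $T$ contains, for each of the $2^{n-k+c}$ syndromes $s$, one operator $E_s\otimes I$ with syndrome $s$ ($E_0=I$), and $C_s=E_s\otimes I$. Encoding $\mathcal U(\rho)=U_E(\rho\otimes|0\rangle\langle0|)U_E^\dagger$; decoding $\mathcal D(\rho')=\mathrm{tr}_{\mathrm{anc}}\big(\sum_sU_E^\dagger C_sP_s\rho'P_sC_s^\dagger U_E\big)$ with $P_s$ the syndrome projectors. Channel fidelity of a channel with Kraus operators $\{K_i\}$ on an $m$-dimensional space: $F_C=\frac1{m^2}\sum_i|\mathrm{tr}K_i|^2$. The one-qubit depolarizing channel with rate $p$ is $\rho\mapsto(1-\frac34p)\rho+\frac p4(X\rho X+Y\rho Y+Z\rho Z)$. *)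

(* Defs.v *)
(* Quantum objects are modelled concretely:
   operators on m qubits are matrices indexed by the computational basis
   {ffun 'I_m -> bool} (via enum_val), over an abstract numeric closed field
   C (e.g. algC, or complex numbers over a real closed field). *)
From HB Require Import structures.
From mathcomp Require Import all_boot all_order all_algebra.
Set Implicit Arguments. Unset Strict Implicit. Unset Printing Implicit Defensive.
Import Order.TTheory GRing.Theory Num.Theory.
Local Open Scope ring_scope.

Definition qb (m : nat) : finType := {ffun 'I_m -> bool}.
(* single-qubit Pauli letter (x,z): I=(0,0), X=(1,0), Z=(0,1), Y=(1,1) *)
Definition letter : finType := (bool * bool)%type.
Definition pI : letter := (false, false).
Definition pX : letter := (true, false).
Definition pZ : letter := (false, true).
(* n-qubit Pauli operator up to phase = tensor product of letters *)
Definition pauli (m : nat) : finType := {ffun 'I_m -> letter}.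
Definition pid (m : nat) : pauli m := [ffun => pI].
Definition pmul (m : nat) (P Q : pauli m) : pauli m :=
  [ffun i => ((P i).1 (+) (Q i).1, (P i).2 (+) (Q i).2)].
Definition weight (m : nat) (P : pauli m) : nat := #|[set i | P i != pI]|.
Definition anticomm (m : nat) (P Q : pauli m) : bool :=
  odd #|[set i | ((P i).1 && (Q i).2) (+) ((P i).2 && (Q i).1)]|.
(* tensor product P (x) Q, P on the first n qubits (Alice), Q on the last c (Bob) *)
Definition pcat (n c : nat) (P : pauli n) (Q : pauli c) : pauli (n + c) :=
  [ffun i => match split i with inl a => P a | inr b => Q b end].
Definition pprod (m : nat) (I : finType) (g : I -> pauli m) (J : {set I}) : pauli m :=
  \big[@pmul m / pid m]_(i in J) g i.
Definition bob1 (c : nat) (j : 'I_c) (a : letter) : pauli c :=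
  [ffun b => if b == j then a else pI].

Section Mat.
Variable C : numClosedFieldType.

Definition sigma (a : letter) (x y : bool) : C :=
  match a with
  | (false, false) => (x == y)%:R
  | (true, false) => (x != y)%:R
  | (false, true) => if x == y then (if x then -1 else 1) else 0
  | (true, true) => if x == y then 0 else if y then - 'i else 'i
  end.

Definition mk (A B : finType) (f : A -> B -> C) : 'M[C]_(#|A|, #|B|) :=
  \matrix_(i, j) f (enum_val i) (enum_val j).

Definition pent (m : nat) (P : pauli m) (x y : qb m) : C :=
  \prod_i sigma (P i) (x i) (y i).
Definition pmat (m : nat) (P : pauli m) : 'M[C]_(#|qb m|) := mk (@pent m P).
Definition smat (m : nat) (bP : bool * pauli m) : 'M[C]_(#|qb m|) :=
  (-1) ^+ bP.1 *: pmat bP.2.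

Definition adj (p q : nat) (A : 'M[C]_(p, q)) : 'M[C]_(q, p) :=
  map_mx (fun x => x^*) A^T.

(* input space of the encoder: k logical qubits (x) r ancilla qubits *)
Definition In (k r : nat) : finType := (qb k * qb r)%type.
Definition qzero (r : nat) : qb r := [ffun => false].
Definition pmatIn (k r : nat) (P1 : pauli k) (P2 : pauli r) : 'M[C]_(#|In k r|) :=
  mk (fun (x y : In k r) => pent P1 x.1 y.1 * pent P2 x.2 y.2).
(* |psi> |-> |psi> (x) |0...0> *)
Definition emb (k r : nat) : 'M[C]_(#|In k r|, #|qb k|) :=
  mk (fun (x : In k r) (y : qb k) => ((x.1 == y) && (x.2 == qzero r))%:R).
(* Kraus operator <a|_anc of the partial trace over the ancillas *)
Definition projA (k r : nat) (a : qb r) : 'M[C]_(#|qb k|, #|In k r|) :=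
  mk (fun (y : qb k) (x : In k r) => ((x.1 == y) && (x.2 == a))%:R).

Definition unitary (p q : nat) (U : 'M[C]_(p, q)) : Prop :=
  adj U *m U = 1%:M /\ U *m adj U = 1%:M.
Definition clifford (k r m : nat) (U : 'M[C]_(#|qb m|, #|In k r|)) : Prop :=
  forall (P1 : pauli k) (P2 : pauli r),
    exists (ph : C) (Q : pauli m), U *m pmatIn P1 P2 *m adj U = ph *: pmat Q.

Definition chan_fid (I : finType) (d : nat) (K : I -> 'M[C]_d) : C :=
  (d%:R ^+ 2)^-1 * \sum_i `|\tr (K i)| ^+ 2.

(* one-qubit depolarizing channel with rate p:
   rho |-> (1 - 3p/4) rho + p/4 (X rho X + Y rho Y + Z rho Z);
   Kraus operators sqrt(dep_w p a) sigma_a *)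
Definition dep_w (p : C) (a : letter) : C :=
  if a == pI then 1 - 3%:R / 4%:R * p else p / 4%:R.
(* Kraus operators of N_A (x) I_B: depolarizing on each of Alice's n qubits,
   identity on Bob's c qubits; indexed by Pauli strings E on Alice's qubits *)
Definition depAB (n c : nat) (p : C) (E : pauli n) : 'M[C]_(#|qb (n + c)|) :=
  (\prod_i sqrtC (dep_w p (E i))) *: pmat (pcat E (pid c)).

(* generators of S': g'_1..g'_{n-k} indexed by inl, h'_1..h'_c by inr *)
Definition gidx (n k c : nat) : finType := ('I_(n - k) + 'I_c)%type.
Definition synd (n k c : nat) : finType := {ffun gidx n k c -> bool}.

Definition Sp_gen (n k c : nat) (gp : 'I_(n - k) -> bool * pauli n)
  (hp : 'I_c -> bool * pauli n) (j : gidx n k c) : bool * pauli n :=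
  match j with inl i => gp i | inr i => hp i end.

(* generators of S on n + c qubits:
   g'_i (x) Z_i, h'_i (x) X_i (i <= c), g'_j (x) I (j > c) *)
Definition S_gen (n k c : nat) (gp : 'I_(n - k) -> bool * pauli n)
  (hp : 'I_c -> bool * pauli n) (j : gidx n k c) : bool * pauli (n + c) :=
  match j with
  | inl i => ((gp i).1, pcat (gp i).2
                 [ffun b : 'I_c => if val b == val i then pZ else pI])
  | inr i => ((hp i).1, pcat (hp i).2 (bob1 i pX))
  end.

Definition syndrome (n k c : nat) (gp : 'I_(n - k) -> bool * pauli n)
  (hp : 'I_c -> bool * pauli n) (E : pauli n) : synd n k c :=
  [ffun j => anticomm E (Sp_gen gp hp j).2].

Definition synproj (n k c : nat) (gp : 'I_(n - k) -> bool * pauli n)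
  (hp : 'I_c -> bool * pauli n) (s : synd n k c) : 'M[C]_(#|qb (n + c)|) :=
  \big[mulmx / 1%:M]_(j : gidx n k c)
     ((2%:R)^-1 *: (1%:M + (-1) ^+ (s j) *: smat (S_gen gp hp j))).

(* Kraus operators of D o (N_A (x) I_B) o U, indexed by the error E of N_A,
   the syndrome s and the ancilla basis state a of the partial trace:
   <a| U_E^dag C_s P_s (K_E) U_E (. (x) |0>) *)
Definition code_kraus (n k c : nat) (p : C) (gp : 'I_(n - k) -> bool * pauli n)
  (hp : 'I_c -> bool * pauli n)
  (U : 'M[C]_(#|qb (n + c)|, #|In k (n - k + c)|))
  (Ef : synd n k c -> pauli n)
  (esa : pauli n * synd n k c * qb (n - k + c)) : 'M[C]_(#|qb k|) :=
  let: (E, s, a) := esa in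
  projA k a *m adj U *m pmat (pcat (Ef s) (pid c)) *m synproj gp hp s
    *m depAB c p E *m U *m emb k (n - k + c).

Definition qw (n : nat) (p : C) (w : nat) : C :=
  (1 - 3%:R / 4%:R * p) ^+ (n - w) * (p / 4%:R) ^+ w.

End Mat.

(* isotropic subgroup S_I = < g'_{c+1}, ..., g'_{n-k} > (elements up to phase) *)
Definition S_I (n k c : nat) (gp : 'I_(n - k) -> bool * pauli n) : {set pauli n} :=
  [set pprod (fun i => (gp i).2) J |
     J in [set J : {set 'I_(n - k)} | [forall i in J, (c <= i)%N]]].
Definition Tset (n k c : nat) (Ef : synd n k c -> pauli n) : {set pauli n} :=
  [set Ef s | s : synd n k c].
Definition TxSI (n k c : nat) (gp : 'I_(n - k) -> bool * pauli n)
  (Ef : synd n k c -> pauli n) : {set pauli n} :=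
  [set pmul h g | h in Tset Ef, g in S_I c gp].
Definition bw (n k c : nat) (gp : 'I_(n - k) -> bool * pauli n)
  (Ef : synd n k c -> pauli n) (w : nat) : nat :=
  #|[set P in TxSI gp Ef | weight P == w]|.

(* Main.v *)
Require Import Defs.
From HB Require Import structures.
From mathcomp Require Import all_boot all_order all_algebra.
From mathcomp Require Import ring.
Set Implicit Arguments. Unset Strict Implicit. Unset Printing Implicit Defensive.
Import Order.TTheory GRing.Theory Num.Theory.
Local Open Scope ring_scope.


Lemma pmulA m : associative (@pmul m).
Proof. by move=> P Q R; apply/ffunP=> i; rewrite !ffunE /= !addbA. Qed.
Lemma pmulC m : commutative (@pmul m).
Proof. by move=> P Q; apply/ffunP=> i; rewrite !ffunE /= addbC [(Q i).2 (+) _]addbC. Qed.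
Lemma pmul1P m : left_id (pid m) (@pmul m).
Proof. by move=> P; apply/ffunP=> i; rewrite !ffunE /=; case: (P i). Qed.
Lemma pmulP1 m : right_id (pid m) (@pmul m).
Proof. by move=> P; rewrite pmulC pmul1P. Qed.
Lemma pmulPP m (P : pauli m) : pmul P P = pid m.
Proof. by apply/ffunP=> i; rewrite !ffunE /= !addbb. Qed.

HB.instance Definition _ m := Monoid.isComLaw.Build (pauli m) (pid m) (@pmul m)
  (@pmulA m) (@pmulC m) (@pmul1P m).

Lemma pmul_eq_pid m (P Q : pauli m) : (pmul P Q == pid m) = (P == Q).
Proof.
apply/eqP/eqP=> [h|->]; last exact: pmulPP.
by rewrite -[Q]pmul1P -h -pmulA pmulPP pmulP1.
Qed.

Lemma odd_card_set m (f : 'I_m -> bool) :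
  odd #|[set i | f i]| = \big[addb/false]_i f i.
Proof.
rewrite cardsE -sum1_card big_mkcond /=.
apply: (big_rec2 (fun n b => odd n = b)) => // i b n _ <-.
have -> : (i \in f) = f i by [].
by rewrite oddD; case: (f i).
Qed.

Definition symp (a b : letter) : bool := (a.1 && b.2) (+) (a.2 && b.1).

Lemma anticommE m (P Q : pauli m) : anticomm P Q = \big[addb/false]_i symp (P i) (Q i).
Proof. by rewrite /anticomm odd_card_set. Qed.

Lemma anticommC m (P Q : pauli m) : anticomm P Q = anticomm Q P.
Proof.
rewrite !anticommE; apply: eq_bigr => i _; rewrite /symp.
by rewrite addbC andbC [_.2 && _]andbC.
Qed.

Lemma anticommMl m (P Q R : pauli m) :
  anticomm (pmul P Q) R = anticomm P R (+) anticomm Q R.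
Proof.
rewrite !anticommE -big_split /=; apply: eq_bigr => i _; rewrite /symp ffunE /=.
by case: (P i) => [[] []]; case: (Q i) => [[] []]; case: (R i) => [[] []].
Qed.

Lemma anticommMr m (P Q R : pauli m) :
  anticomm R (pmul P Q) = anticomm R P (+) anticomm R Q.
Proof. by rewrite !(anticommC R) anticommMl. Qed.

Lemma anticomm1 m (P : pauli m) : anticomm (pid m) P = false.
Proof. by rewrite anticommE big1 // => i _; rewrite ffunE. Qed.

Lemma pcatE_l n c (P : pauli n) (Q : pauli c) (i : 'I_n) : pcat P Q (lshift c i) = P i.
Proof. by rewrite ffunE; have /= -> := @unsplitK n c (inl i). Qed.
Lemma pcatE_r n c (P : pauli n) (Q : pauli c) (i : 'I_c) : pcat P Q (rshift n i) = Q i.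
Proof. by rewrite ffunE; have /= -> := @unsplitK n c (inr i). Qed.

Lemma pcat_inj n c (P P' : pauli n) (Q Q' : pauli c) :
  pcat P Q = pcat P' Q' -> P = P' /\ Q = Q'.
Proof.
move=> h; split; apply/ffunP=> i.
  by rewrite -(pcatE_l P Q) h pcatE_l.
by rewrite -(pcatE_r P Q) h pcatE_r.
Qed.

Lemma pcat_mul n c (P P' : pauli n) (Q Q' : pauli c) :
  pmul (pcat P Q) (pcat P' Q') = pcat (pmul P P') (pmul Q Q').
Proof. by apply/ffunP=> i; rewrite !ffunE; case: split => j; rewrite !ffunE. Qed.

Lemma pcat_id n c : pcat (pid n) (pid c) = pid (n + c).
Proof. by apply/ffunP=> i; rewrite !ffunE; case: split => j; rewrite !ffunE. Qed.

Lemma anticomm_pcat n c (P P' : pauli n) (Q Q' : pauli c) :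
  anticomm (pcat P Q) (pcat P' Q') = anticomm P P' (+) anticomm Q Q'.
Proof.
rewrite !anticommE big_split_ord /=.
by congr (_ (+) _); apply: eq_bigr => i _; rewrite ?pcatE_l ?pcatE_r.
Qed.


Section Mat2.
Variable C : numClosedFieldType.

Lemma sum_enumv (R : nmodType) (T : finType) (F : T -> R) :
  \sum_(i < #|T|) F (enum_val i) = \sum_x F x.
Proof. by rewrite (big_enum_val F). Qed.

Definition om (a b : letter) : C :=
  match a, b with
  | (true,false),(false,true) => -'i
  | (false,true),(true,false) => 'i
  | (true,false),(true,true) => 'i
  | (true,true),(true,false) => -'i
  | (true,true),(false,true) => 'i
  | (false,true),(true,true) => -'i
  | _,_ => 1 end.

Definition lmul (a b : letter) : letter := (a.1 (+) b.1, a.2 (+) b.2).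

Lemma ii : 'i * 'i = -1 :> C.
Proof. by rewrite -expr2 sqrCi. Qed.

Lemma sigma_mul a b x y :
  \sum_(z : bool) sigma C a x z * sigma C b z y = om a b * sigma C (lmul a b) x y.
Proof.
rewrite big_bool.
case: a => [[] []]; case: b => [[] []]; case: x; case: y => /=;
  rewrite ?(mul0r,mulr0,mul1r,mulr1,addr0,add0r,mulrN,mulNr,opprK,ii) //.
Qed.

Definition omP m (P Q : pauli m) : C := \prod_i om (P i) (Q i).

Lemma pmatE m (P : pauli m) i j : pmat C P i j = pent C P (enum_val i) (enum_val j).
Proof. by rewrite /pmat /mk mxE. Qed.

Lemma pmat_mul m (P Q : pauli m) :
  pmat C P *m pmat C Q = omP P Q *: pmat C (pmul P Q).
Proof.
apply/matrixP=> i j; rewrite !mxE.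
under eq_bigr do rewrite !pmatE.
rewrite (@sum_enumv _ (qb m) (fun z => pent C P (enum_val i) z * pent C Q z (enum_val j))).
move: (enum_val i) (enum_val j) => x y.
transitivity (\prod_t \sum_(b : bool) sigma C (P t) (x t) b * sigma C (Q t) b (y t)).
  rewrite bigA_distr_bigA /=; apply: eq_bigr => z _.
  by rewrite /pent -big_split.
rewrite /omP /pent -big_split /=; apply: eq_bigr => t _.
by rewrite sigma_mul ffunE.
Qed.

Lemma sigma_diag a : \sum_(b : bool) sigma C a b b = (a == pI)%:R * 2%:R.
Proof.
rewrite big_bool; case: a => [[] []] /=;
  rewrite ?(eqxx, addr0, add0r, mul1r, mul0r, subrr, addNr) //.
Qed.

Lemma pmat_tr m (P : pauli m) : \tr (pmat C P) = (P == pid m)%:R * 2%:R ^+ m.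
Proof.
rewrite /mxtrace; under eq_bigr do rewrite pmatE.
rewrite (@sum_enumv _ (qb m) (fun z => pent C P z z)).
transitivity (\prod_t \sum_(b : bool) sigma C (P t) b b).
  by rewrite bigA_distr_bigA /=.
under eq_bigr do rewrite sigma_diag.
case: eqP => [->|neq].
  under eq_bigr do rewrite ffunE eqxx mul1r.
  by rewrite prodr_const card_ord mul1r.
have [t Ht] : exists t, P t != pI.
  case/boolP: [exists t, P t != pI] => [/existsP //|/existsPn h].
  by exfalso; apply: neq; apply/ffunP=> t; rewrite ffunE; exact/eqP/negbNE/h.
by rewrite (bigD1 t) //= (negbTE Ht) !mul0r.
Qed.

Definition adjm p q (A : 'M[C]_(p, q)) := adj A.

Lemma adjE p q (A : 'M[C]_(p, q)) i j : adj A i j = (A j i)^*.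
Proof. by rewrite /adj !mxE. Qed.

Lemma sigma_conj a x y : (sigma C a y x)^* = sigma C a x y.
Proof.
case: a => [[] []]; case: x; case: y => /=;
  rewrite ?(conjCi, rmorph1, rmorph0, conjC_nat) //.
all: try by rewrite raddfN /= conjCi opprK.
all: try by rewrite raddfN /= rmorph1.

Qed.

Lemma pmat_adj m (P : pauli m) : adj (pmat C P) = pmat C P.
Proof.
apply/matrixP=> i j; rewrite adjE !pmatE /pent rmorph_prod.
by apply: eq_bigr => t _; exact: sigma_conj.
Qed.

Lemma pmat_id m : pmat C (pid m) = 1%:M.
Proof.
apply/matrixP=> i j; rewrite pmatE mxE /pent.
under eq_bigr do rewrite ffunE.
have -> : (i == j) = (enum_val i == enum_val j :> qb m).
  by rewrite (inj_eq enum_val_inj).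
move: (enum_val i) (enum_val j) => x y.
case: (x =P y) => [->|neq].
  by rewrite big1 // => t _; rewrite /= eqxx.
have [t Ht] : exists t, x t != y t.
  case/boolP: [exists t, x t != y t] => [/existsP //|/existsPn h].
  by exfalso; apply: neq; apply/ffunP=> t; exact/eqP/negbNE/h.
by rewrite (bigD1 t) //= (negbTE Ht) mul0r.
Qed.

Lemma omPP m (P : pauli m) : omP P P = 1.
Proof. by rewrite /omP big1 // => t _; case: (P t) => [[] []]. Qed.

Lemma pmat_sq m (P : pauli m) : pmat C P *m pmat C P = 1%:M.
Proof. by rewrite pmat_mul omPP scale1r pmulPP pmat_id. Qed.

Lemma om_norm a b : `|om a b| = 1.
Proof. by case: a => [[] []]; case: b => [[] []]; rewrite /= ?normrN ?normCi ?normr1. Qed.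

Lemma omP_norm m (P Q : pauli m) : `|omP P Q| = 1.
Proof. by rewrite normr_prod big1 // => t _; rewrite om_norm. Qed.

Lemma om_comm a b : om a b = (-1) ^+ symp a b * om b a.
Proof.
by case: a => [[] []]; case: b => [[] []]; rewrite /= ?expr0 ?expr1 ?mul1r ?mulN1r ?opprK.
Qed.

Lemma sign_bigaddb I (r : seq I) (F : I -> bool) :
  \prod_(i <- r) (-1) ^+ (F i) = (-1) ^+ (\big[addb/false]_(i <- r) F i) :> C.
Proof.
elim: r => [|i r IH]; first by rewrite !big_nil expr0.
by rewrite !big_cons IH signr_addb.
Qed.

Lemma omP_comm m (P Q : pauli m) :
  omP P Q = (-1) ^+ anticomm P Q * omP Q P.
Proof.
rewrite /omP anticommE -sign_bigaddb -big_split /=.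
by apply: eq_bigr => t _; rewrite om_comm.
Qed.

Lemma pmat_comm m (P Q : pauli m) :
  pmat C P *m pmat C Q = (-1) ^+ anticomm P Q *: (pmat C Q *m pmat C P).
Proof. by rewrite !pmat_mul scalerA -omP_comm pmulC. Qed.
End Mat2.


Section Gen.
Variable C : numClosedFieldType.

Lemma adj_mul p q r (A : 'M[C]_(p, q)) (B : 'M[C]_(q, r)) :
  adj (A *m B) = adj B *m adj A.
Proof. by rewrite /adj trmx_mul map_mxM. Qed.

Lemma adj_scale p q (w : C) (A : 'M[C]_(p, q)) : adj (w *: A) = w^* *: adj A.
Proof. by rewrite /adj linearZ /= map_mxZ. Qed.

Lemma adjK p q (A : 'M[C]_(p, q)) : adj (adj A) = A.
Proof. by apply/matrixP=> i j; rewrite !adjE conjCK. Qed.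

Lemma tr_adj_self p q (A : 'M[C]_(p, q)) :
  \tr (adj A *m A) = \sum_i \sum_j `|A j i| ^+ 2.
Proof.
rewrite /mxtrace; apply: eq_bigr => i _; rewrite mxE.
by apply: eq_bigr => j _; rewrite adjE normCKC.
Qed.

Lemma tr_adj_self0 p q (A : 'M[C]_(p, q)) : \tr (adj A *m A) = 0 -> A = 0.
Proof.
rewrite tr_adj_self => h; apply/matrixP=> j i; rewrite mxE.
have h1 : \sum_j `|A j i| ^+ 2 = 0.
  apply: (psumr_eq0P _ h) => // i1 _.
  by apply: sumr_ge0 => j1 _; rewrite exprn_ge0.
have : `|A j i| ^+ 2 = 0.
  by apply: (psumr_eq0P _ h1) => // j1 _; rewrite exprn_ge0.
by move/eqP; rewrite sqrf_eq0 normr_eq0 => /eqP.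
Qed.

Definition ph m (A : 'M[C]_(#|qb m|)) (P : pauli m) :=
  exists w : C, `|w| = 1 /\ A = w *: pmat C P.

Lemma ph_pmat m (P : pauli m) : ph (pmat C P) P.
Proof. by exists 1; rewrite normr1 scale1r. Qed.

Lemma ph_smat m (bP : bool * pauli m) : ph (smat C bP) bP.2.
Proof. by exists ((-1) ^+ bP.1); rewrite normrX normrN1 expr1n. Qed.

Lemma ph_one m : ph (1%:M) (pid m).
Proof. by rewrite -pmat_id; exact: ph_pmat. Qed.

Lemma ph_mul m (A B : 'M[C]_(#|qb m|)) P Q :
  ph A P -> ph B Q -> ph (A *m B) (pmul P Q).
Proof.
move=> [w [nw ->]] [w' [nw' ->]]; exists (w * w' * omP C P Q); split.
  by rewrite !normrM nw nw' omP_norm !mul1r.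
by rewrite -scalemxAl -scalemxAr pmat_mul !scalerA.
Qed.

Lemma ph_tr0 m (A : 'M[C]_(#|qb m|)) P : ph A P -> P != pid m -> \tr A = 0.
Proof. by move=> [w [_ ->]] /negbTE h; rewrite mxtraceZ pmat_tr h mul0r mulr0. Qed.

Lemma ph_tr1 m (A : 'M[C]_(#|qb m|)) : ph A (pid m) -> `|\tr A| = 2%:R ^+ m.
Proof.
move=> [w [nw ->]]; rewrite mxtraceZ pmat_tr eqxx mul1r normrM nw mul1r.
by rewrite normrX normr_nat.
Qed.

Lemma ph_adj m (A : 'M[C]_(#|qb m|)) P : ph A P -> ph (adj A) P.
Proof.
move=> [w [nw ->]]; exists w^*; split; first by rewrite norm_conjC.
by rewrite adj_scale pmat_adj.
Qed.

Lemma ph_trHS0 m (A B : 'M[C]_(#|qb m|)) P Q : ph A P -> ph B Q -> P != Q ->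
  \tr (adj A *m B) = 0.
Proof.
move=> hA hB neq; apply: (@ph_tr0 m _ (pmul P Q)); last by rewrite pmul_eq_pid.
by apply: ph_mul => //; exact: ph_adj.
Qed.

Lemma ph_trHS1 m (A : 'M[C]_(#|qb m|)) P : ph A P -> \tr (adj A *m A) = 2%:R ^+ m.
Proof.
move=> [w [nw eA]]; rewrite eA adj_scale pmat_adj -scalemxAl -scalemxAr.
rewrite pmat_sq !mxtraceZ mxtrace1 mulrA -normCKC nw expr1n mul1r.
by rewrite card_ffun card_bool card_ord natrX.
Qed.
End Gen.


Section Code.
Variable C : numClosedFieldType.
Variables (n k c : nat) (gp : 'I_(n - k) -> bool * pauli n) (hp : 'I_c -> bool * pauli n).

Definition EI (E : pauli n) : pauli (n + c) := pcat E (pid c).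
Definition G j := smat C (S_gen gp hp j).

Lemma anticomm_EI E j :
  anticomm (EI E) (S_gen gp hp j).2 = anticomm E (Sp_gen gp hp j).2.
Proof. by case: j => i /=; rewrite anticomm_pcat anticomm1 addbF. Qed.

Lemma G_pmat (P : pauli (n + c)) j :
  G j *m pmat C P = (-1) ^+ anticomm P (S_gen gp hp j).2 *: (pmat C P *m G j).
Proof.
rewrite /G /smat -scalemxAl -scalemxAr pmat_comm anticommC !scalerA.
by rewrite mulrC.
Qed.

Lemma half2 : (2%:R : C)^-1 * (1 + 1) = 1.
Proof. by rewrite -[1 + 1]/(2%:R) mulVf // pnatr_eq0. Qed.

Lemma synproj_eig q (Y : 'M[C]_(#|qb (n + c)|, q)) (b : synd n k c) :
  (forall j, G j *m Y = (-1) ^+ b j *: Y) ->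
  forall s, synproj C gp hp s *m Y = (s == b)%:R *: Y.
Proof.
move=> hY s.
transitivity ((\prod_j ((s j == b j)%:R : C)) *: Y).
  rewrite /synproj.
  apply: (big_rec2 (fun (M : 'M[C]_(#|qb (n + c)|)) (x : C) => M *m Y = x *: Y)).
    by rewrite mul1mx scale1r.
  move=> j M x _ IH.
  rewrite -mulmxA IH -scalemxAr -scalemxAl mulmxDl mul1mx -scalemxAl hY.
  rewrite scalerA [(-1) ^+ s j *: _]scalerA -signr_addb -{1}[Y]scale1r -scalerDl scalerA.
  congr (_ *: _).
  case: (s j); case: (b j) => /=; rewrite ?expr0 ?expr1 ?addrN ?mulr0 ?mul0r //.
    by rewrite mul1r -mulrA half2 mulr1.
  by rewrite mul1r -mulrA half2 mulr1.
congr (_ *: _).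
case: (s =P b) => [->|neq].
  by rewrite big1 // => j _; rewrite eqxx.
have [j Hj] : exists j, s j != b j.
  case/boolP: [exists j, s j != b j] => [/existsP //|/existsPn h].
  by exfalso; apply: neq; apply/ffunP=> j; exact/eqP/negbNE/h.
by rewrite (bigD1 j) //= (negbTE Hj) mul0r.
Qed.

Definition z0 : synd n k c := [ffun => false].

Definition Gf (f : {ffun gidx n k c -> bool}) : 'M[C]_(#|qb (n + c)|) :=
  \prod_j (if f j then G j else 1).
Definition Pf (f : {ffun gidx n k c -> bool}) : pauli (n + c) :=
  \big[@pmul _/pid _]_j (if f j then (S_gen gp hp j).2 else pid _).

Lemma prod_scale d (I : finType) (a : C) (F : I -> 'M[C]_d) :
  \prod_j (a *: F j) = (\prod_(j : I) a) *: \prod_j F j.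
Proof.
apply: (big_rec3 (fun (M : 'M[C]_d) (x : C) (M' : 'M[C]_d) => M = x *: M')).
  by rewrite scale1r.
by move=> j M x M' _ ->; rewrite -!mulmxE -scalemxAl -scalemxAr scalerA.
Qed.

Lemma synproj0_sum :
  synproj C gp hp z0 = (\prod_(j : gidx n k c) (2%:R^-1 : C)) *: \sum_f Gf f.
Proof.
rewrite /synproj /z0 mulmxE idmxE.
transitivity (\prod_j ((2%:R^-1 : C) *: (1 + G j))).
  by apply: eq_bigr => j _; rewrite ffunE expr0 scale1r.
rewrite prod_scale; congr (_ *: _).
transitivity (\prod_j \sum_(b : bool) (if b then G j else (1 : 'M[C]_(#|qb (n + c)|)))).
  by apply: eq_bigr => j _; rewrite big_bool /= addrC.
by rewrite bigA_distr_bigA.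
Qed.

Lemma Gf_ph f : ph (Gf f) (Pf f).
Proof.
rewrite /Gf /Pf.
apply: (big_rec2 (fun (M : 'M[C]_(#|qb (n + c)|)) P => ph M P)).
  by rewrite -idmxE; exact: ph_one.
move=> j M P _ hM; case: (f j).
  by rewrite -mulmxE; apply: ph_mul => //; exact: ph_smat.
by rewrite mul1r pmul1P.
Qed.

Lemma bigpmul_pcat (I : finType) (a : I -> pauli n) (b : I -> pauli c) :
  \big[@pmul _/pid _]_i pcat (a i) (b i) =
  pcat (\big[@pmul _/pid _]_i a i) (\big[@pmul _/pid _]_i b i).
Proof.
apply: (big_rec3 (fun x y z => x = pcat y z)); first by rewrite pcat_id.
by move=> i x y z _ ->; rewrite pcat_mul.
Qed.

Definition bob (j : gidx n k c) : pauli c :=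
  match j with
  | inl i => [ffun b : 'I_c => if val b == val i then pZ else pI]
  | inr i => bob1 i pX
  end.

Lemma S_gen_pcat j : (S_gen gp hp j).2 = pcat (Sp_gen gp hp j).2 (bob j).
Proof. by case: j. Qed.

Definition Af (f : {ffun gidx n k c -> bool}) : pauli n :=
  \big[@pmul _/pid _]_j (if f j then (Sp_gen gp hp j).2 else pid _).
Definition Bf (f : {ffun gidx n k c -> bool}) : pauli c :=
  \big[@pmul _/pid _]_j (if f j then bob j else pid _).

Lemma Pf_pcat f : Pf f = pcat (Af f) (Bf f).
Proof.
rewrite /Pf -bigpmul_pcat; apply: eq_bigr => j _.
by rewrite S_gen_pcat; case: (f j); rewrite ?pcat_id.
Qed.

Lemma pprod_cond m (I : finType) (g : I -> pauli m) (d : I -> bool) :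
  pprod g [set i | d i] = \big[@pmul _/pid _]_i (if d i then g i else pid _).
Proof. by rewrite /pprod big_mkcond; apply: eq_bigr => i _; rewrite inE. Qed.

Hypothesis Hind : forall (A : {set 'I_(n - k)}) (B : {set 'I_c}),
  pmul (pprod (fun i => (gp i).2) A) (pprod (fun j => (hp j).2) B) = pid n ->
  A = set0 /\ B = set0.

Lemma Af_indep f : Af f = pid n -> f = z0.
Proof.
rewrite /Af big_sumType /= -!pprod_cond => /Hind [hA hB].
apply/ffunP => -[i|i]; rewrite ffunE.
  by move/setP/(_ i): hA; rewrite !inE => /negbT/negbTE.
by move/setP/(_ i): hB; rewrite !inE => /negbT/negbTE.
Qed.

Lemma Pf_inj f f' : Pf f = Pf f' -> f = f'.
Proof.
move=> h.
pose fx : {ffun gidx n k c -> bool} := [ffun j => f j (+) f' j].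
have hx : Pf fx = pmul (Pf f) (Pf f').
  rewrite /Pf -big_split; apply: eq_bigr => j _; rewrite ffunE.
  by case: (f j); case: (f' j); rewrite /= ?pmulPP ?pmul1P ?pmulP1.
rewrite h pmulPP -pcat_id Pf_pcat in hx.
have [/Af_indep hx0 _] := pcat_inj hx.
apply/ffunP => j; move/ffunP/(_ j): hx0; rewrite !ffunE.
by case: (f j); case: (f' j).
Qed.
End Code.


Section Gen2.
Variable C : numClosedFieldType.

Lemma adjB p q (A B : 'M[C]_(p, q)) : adj (A - B) = adj A - adj B.
Proof. by apply/matrixP=> i j; rewrite !(adjE, mxE) rmorphB. Qed.

Lemma adjD p q (A B : 'M[C]_(p, q)) : adj (A + B) = adj A + adj B.
Proof. by apply/matrixP=> i j; rewrite !(adjE, mxE) rmorphD. Qed.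

Lemma adj_sum p q (I : finType) (F : I -> 'M[C]_(p, q)) : adj (\sum_i F i) = \sum_i adj (F i).
Proof.
apply: (big_rec2 (fun A B => adj A = B)); last by move=> i A B _ <-; rewrite adjD.
by apply/matrixP=> i j; rewrite !(adjE, mxE) rmorph0.
Qed.

Lemma emb_iso k r : adj (emb C k r) *m emb C k r = 1%:M.
Proof.
apply/matrixP=> i j; rewrite !mxE.
under eq_bigr do rewrite adjE /emb /mk !mxE conjC_nat.
rewrite (@sum_enumv _ (In k r) (fun x => (((x.1 == enum_val i) && (x.2 == qzero r))%:R *
   ((x.1 == enum_val j) && (x.2 == qzero r))%:R))).
rewrite (bigD1 (enum_val i, qzero r)) //= big1 => [|[x1 x2] hx]; last first.
  move: hx; rewrite /= xpair_eqE.
  by case: (x1 == enum_val i); case: (x2 == qzero r); rewrite /= ?mul0r.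
by rewrite !eqxx mul1r addr0 (inj_eq enum_val_inj) andbT.
Qed.

Lemma card_qb m : #|qb m|%:R = 2%:R ^+ m :> C.
Proof. by rewrite card_ffun card_bool card_ord natrX. Qed.

End Gen2.

Section Code2.
Variable C : numClosedFieldType.
Variables (n k c : nat) (gp : 'I_(n - k) -> bool * pauli n) (hp : 'I_c -> bool * pauli n)
  (U : 'M[C]_(#|qb (n + c)|, #|In k (n - k + c)|)).
Hypothesis Hkn : (k <= n)%N.
Hypothesis Hind : forall (A : {set 'I_(n - k)}) (B : {set 'I_c}),
  pmul (pprod (fun i => (gp i).2) A) (pprod (fun j => (hp j).2) B) = pid n ->
  A = set0 /\ B = set0.
Hypothesis HU : unitary U.
Hypothesis Hstab : forall j : gidx n k c,
  smat C (S_gen gp hp j) *m (U *m emb C k (n - k + c)) = U *m emb C k (n - k + c).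

Definition V := U *m emb C k (n - k + c).
Definition Pi0 := synproj C gp hp (z0 n k c).
Definition acoef : C := \prod_(j : gidx n k c) (2%:R^-1 : C).

Lemma V_iso : adj V *m V = 1%:M.
Proof. by rewrite /V adj_mul -mulmxA (mulmxA (adj U)) HU.1 mul1mx emb_iso. Qed.

Lemma UadjV : adj U *m V = emb C k (n - k + c).
Proof. by rewrite /V mulmxA HU.1 mul1mx. Qed.

Lemma Pi0V : Pi0 *m V = V.
Proof.
rewrite /Pi0 (@synproj_eig C n k c gp hp _ V (z0 n k c)) ?eqxx ?scale1r //.
by move=> j; rewrite /z0 ffunE expr0 scale1r; exact: Hstab.
Qed.

Lemma acoefE : acoef = (2%:R ^+ (n - k + c))^-1.
Proof.
rewrite /acoef prodr_const card_sum !card_ord exprVn //.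
Qed.

Lemma tr1k : \tr (1%:M : 'M[C]_(#|qb k|)) = 2%:R ^+ k.
Proof. by rewrite mxtrace1 card_qb. Qed.

Lemma two_ne0 : (2%:R : C) != 0.
Proof. by rewrite pnatr_eq0. Qed.

Lemma tr_Pi0_HS : \tr (adj Pi0 *m Pi0) = 2%:R ^+ k.
Proof.
rewrite /Pi0 synproj0_sum -/acoef adj_scale adj_sum -scalemxAl -scalemxAr.
rewrite mulmx_suml !mxtraceZ raddf_sum /=.
under eq_bigr => f _ do rewrite mulmx_sumr raddf_sum /=.
transitivity (acoef^* * (acoef * \sum_(f : {ffun gidx n k c -> bool}) 2%:R ^+ (n + c))).
  congr (_ * (_ * _)); apply: eq_bigr => f _.
  rewrite (bigD1 f) //= big1 ?addr0; first exact: (ph_trHS1 (Gf_ph C gp hp f)).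
  move=> f' hf'; apply: (ph_trHS0 (Gf_ph C gp hp f) (Gf_ph C gp hp f')).
  by apply: contra hf' => /eqP /(Pf_inj Hind) ->.
rewrite sumr_const card_ffun card_bool card_sum !card_ord acoefE.
rewrite -natrX conj_Creal; last by rewrite rpredV realn.
have -> : (n + c = (n - k + c) + k)%N by rewrite addnAC subnK.
rewrite exprD natrX.
have h2 : (2%:R : C) ^+ (n - k + c) != 0 by rewrite expf_neq0 // two_ne0.
rewrite -[_ *+ (2 ^ _)%N]mulr_natr natrX; move: h2.
set x := (2%:R : C) ^+ (n - k + c); move=> h2.
by field.
Qed.

Lemma Pi0_eq : Pi0 = V *m adj V.
Proof.
apply/eqP; rewrite -subr_eq0; apply/eqP; apply: tr_adj_self0.
rewrite adjB adj_mul adjK mulmxBl !mulmxBr !raddfB /=.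
have t2 : \tr (adj Pi0 *m (V *m adj V)) = 2%:R ^+ k.
  by rewrite mulmxA mxtrace_mulC mulmxA -adj_mul Pi0V V_iso tr1k.
have t3 : \tr ((V *m adj V) *m Pi0) = 2%:R ^+ k.
  by rewrite -mulmxA mxtrace_mulC -mulmxA Pi0V V_iso tr1k.
have t4 : \tr ((V *m adj V) *m (V *m adj V)) = 2%:R ^+ k.
  by rewrite mulmxA -(mulmxA V) V_iso mulmx1 mxtrace_mulC V_iso tr1k.
by rewrite tr_Pi0_HS t2 t3 t4 !subrr addr0.
Qed.

Lemma acoef_norm : `|acoef| * 2%:R ^+ (n + c) = 2%:R ^+ k.
Proof.
rewrite acoefE normfV normrX normr_nat.
have -> : (n + c = (n - k + c) + k)%N by rewrite addnAC subnK.
rewrite [2%:R ^+ (_ + k)]exprD.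
have h2 : (2%:R : C) ^+ (n - k + c) != 0 by rewrite expf_neq0 // two_ne0.
move: h2; set x := (2%:R : C) ^+ (n - k + c); move=> h2.
by field.
Qed.

Lemma tr_QPi0 (Q : 'M[C]_(#|qb (n + c)|)) P : ph Q P ->
  `|\tr (Q *m Pi0)| = [exists f, Pf gp hp f == P]%:R * 2%:R ^+ k.
Proof.
move=> hQ.
rewrite /Pi0 synproj0_sum -/acoef -scalemxAr mulmx_sumr mxtraceZ raddf_sum /=.
case: existsP => [[f0 /eqP hf0]|hno].
  rewrite (bigD1 f0) //= big1 ?addr0 => [|f hf].
    have := ph_mul hQ (Gf_ph C gp hp f0); rewrite hf0 pmulPP => /ph_tr1 h1.
    by rewrite normrM h1 mul1r acoef_norm.
  apply: (ph_tr0 (ph_mul hQ (Gf_ph C gp hp f))); rewrite pmul_eq_pid.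
  by apply: contra hf => /eqP e; apply/eqP/(Pf_inj Hind); rewrite hf0 e.
rewrite big1 ?mulr0 ?normr0 ?mul0r // => f _.
apply: (ph_tr0 (ph_mul hQ (Gf_ph C gp hp f))); rewrite pmul_eq_pid.
by apply/negP => /eqP e; apply: hno; exists f; rewrite e.
Qed.
End Code2.


Lemma bigpmulE m (I : finType) (X : I -> pauli m) t :
  (\big[@pmul _/pid _]_i X i) t =
  (\big[addb/false]_i (X i t).1, \big[addb/false]_i (X i t).2).
Proof.
apply: (big_rec3 (fun (P : pauli m) x z => P t = (x, z))); first by rewrite ffunE.
by move=> i P x z _ e; rewrite ffunE e.
Qed.

Lemma anticomm_prod m (I : finType) (h : I -> pauli m) (J : {set I}) X :
  anticomm (pprod h J) X = \big[addb/false]_(i in J) anticomm (h i) X.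
Proof.
rewrite /pprod; apply: (big_rec2 (fun (P : pauli m) b => anticomm P X = b)).
  exact: anticomm1.
by move=> i P b _ <-; rewrite anticommMl.
Qed.

Section SI.
Variables (n k c : nat) (gp : 'I_(n - k) -> bool * pauli n) (hp : 'I_c -> bool * pauli n).
Hypothesis Hc : (c <= n - k)%N.
Hypothesis Hgg : forall i j : 'I_(n - k), ~~ anticomm (gp i).2 (gp j).2.
Hypothesis Hgh : forall (i : 'I_(n - k)) (j : 'I_c),
      anticomm (gp i).2 (hp j).2 = (val i == val j).

Lemma syndrome_mul P Q :
  syndrome gp hp (pmul P Q) = [ffun j => syndrome gp hp P j (+) syndrome gp hp Q j].
Proof. by apply/ffunP=> j; rewrite !ffunE anticommMl. Qed.

Lemma syn_SI g : g \in S_I c gp -> syndrome gp hp g = z0 n k c.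
Proof.
case/imsetP => J; rewrite inE => /forallP hJ ->.
apply/ffunP => j; rewrite !ffunE anticomm_prod big1 // => i iJ.
have := hJ i; rewrite iJ /= => ci.
case: j => [i'|j] /=; first exact/negbTE/Hgg.
rewrite Hgh; apply/negbTE; rewrite neq_ltn; apply/orP; right.
exact: leq_trans (ltn_ord j) ci.
Qed.

Lemma bob_x (f : {ffun gidx n k c -> bool}) (b : 'I_c) (j : gidx n k c) :
  ((if f j then bob j else pid c) b).1 = f j && (j == inr b).
Proof.
case: j => [i|i]; case: (f _) => /=; rewrite ?ffunE //=.
  by case: ifP.
by rewrite eq_sym; case: ifP.
Qed.

Lemma bob_z (f : {ffun gidx n k c -> bool}) (b : 'I_c) (j : gidx n k c) :
  ((if f j then bob j else pid c) b).2 = f j && (j == inl (widen_ord Hc b)).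
Proof.
case: j => [i|i]; case: (f _) => /=; rewrite ?ffunE //=.
  have -> : (inl i == inl (widen_ord Hc b) :> gidx n k c) = (val b == val i).
    apply/eqP/eqP => h; first by case: h => ->.
    by congr inl; apply/val_inj; rewrite /= h.
  by case: ifP.
by case: ifP.
Qed.

Lemma exists_Pf_SI F :
  [exists f, Pf gp hp f == pcat F (pid c)] = (F \in S_I c gp).
Proof.
apply/existsP/idP.
  case=> f /eqP; rewrite Pf_pcat => /pcat_inj [hA hB].
  have hr : forall b : 'I_c, f (inr b) = false.
    move=> b; move/ffunP/(_ b): hB; rewrite bigpmulE ffunE => -[hx _].
    rewrite (eq_bigr _ (fun j _ => bob_x f b j)) in hx.
    rewrite (bigD1 (inr b)) //= eqxx andbT big1 ?addbF // in hx.
    by move=> j /negbTE ->; rewrite andbF.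
  have hl : forall b : 'I_c, f (inl (widen_ord Hc b)) = false.
    move=> b; move/ffunP/(_ b): hB; rewrite bigpmulE ffunE => -[_ hx].
    rewrite (eq_bigr _ (fun j _ => bob_z f b j)) in hx.
    rewrite (bigD1 (inl (widen_ord Hc b))) //= eqxx andbT big1 ?addbF // in hx.
    by move=> j /negbTE ->; rewrite andbF.
  apply/imsetP; exists [set i | f (inl i)].
    rewrite inE; apply/forallP => i; apply/implyP; rewrite inE => hi.
    rewrite leqNgt; apply/negP => ic.
    have := hl (Ordinal ic).
    have -> : widen_ord Hc (Ordinal ic) = i by apply/val_inj.
    by rewrite hi.
  rewrite -hA /Af big_sumType /= [X in pmul _ X]big1 ?pmulP1 => [|j _]; last by rewrite hr.
  by rewrite pprod_cond.
case/imsetP => J; rewrite inE => /forallP hJ ->.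
exists [ffun j : gidx n k c => match j with inl i => i \in J | inr _ => false end].
apply/eqP; rewrite Pf_pcat; congr pcat.
  rewrite /Af big_sumType /= [X in pmul _ X]big1 ?pmulP1 => [|j _]; last by rewrite ffunE.
  by rewrite /pprod [RHS]big_mkcond; apply: eq_bigr => i _; rewrite ffunE.
rewrite /Bf big1 // => -[i|i] _; rewrite ffunE //=.
case: ifP => // iJ; apply/ffunP => b; rewrite !ffunE.
have := hJ i; rewrite iJ /= => ci.
rewrite ifF //; apply/negbTE; rewrite neq_ltn (leq_trans (ltn_ord b) ci) //.
Qed.

Lemma TxSI_mem (Ef : synd n k c -> pauli n)
    (HEf : forall s : synd n k c, syndrome gp hp (Ef s) = s) E :
  (E \in TxSI gp Ef) = (pmul (Ef (syndrome gp hp E)) E \in S_I c gp).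
Proof.
apply/idP/idP.
  case/imset2P => h g /imsetP [s _ ->] hg ->.
  rewrite syndrome_mul HEf (syn_SI hg).
  have -> : [ffun j => s j (+) z0 n k c j] = s by apply/ffunP=> j; rewrite !ffunE addbF.
  by rewrite pmulA pmulPP pmul1P.
move=> h; apply/imset2P; exists (Ef (syndrome gp hp E)) (pmul (Ef (syndrome gp hp E)) E) => //.
  exact: imset_f.
by rewrite pmulA pmulPP pmul1P.
Qed.
End SI.


Section Fin.
Variable C : numClosedFieldType.

Lemma dep_w_ge0 (p : C) a : 0 <= p -> p <= 1 -> 0 <= dep_w p a.
Proof.
move=> p0 p1; rewrite /dep_w; case: (a == pI); last by rewrite divr_ge0 ?ler0n.
rewrite subr_ge0.
have h34 : 0 <= 3%:R / 4%:R :> C by rewrite divr_ge0 ?ler0n.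
apply: (le_trans (ler_wpM2l h34 p1)); rewrite mulr1.
by rewrite ler_pdivrMr ?ltr0n // mul1r ler_nat.
Qed.

Lemma alpha_norm n (p : C) (E : pauli n) : 0 <= p -> p <= 1 ->
  `|\prod_i sqrtC (dep_w p (E i))| ^+ 2 = qw n p (weight E).
Proof.
move=> p0 p1; rewrite normr_prod -prodrXl.
under eq_bigr => i _ do rewrite ger0_norm ?sqrtC_ge0 ?dep_w_ge0 // sqrtCK.
rewrite (bigID (fun i => E i == pI)) /=.
have -> : \prod_(i | E i == pI) dep_w p (E i) = (1 - 3%:R / 4%:R * p) ^+ #|[set i | E i == pI]|.
  rewrite -prodr_const; apply: eq_big => i; first by rewrite inE.
  by rewrite /dep_w => ->.
have -> : \prod_(i | E i != pI) dep_w p (E i) = (p / 4%:R) ^+ weight E.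
  rewrite /weight -prodr_const; apply: eq_big => i; first by rewrite inE.
  by rewrite /dep_w => /negbTE ->.
rewrite /qw; congr (_ ^+ _ * _).
rewrite -[X in (X - _)%N](card_ord n) -(cardsC [set i | E i != pI]).
rewrite /weight addKn; by apply: eq_card => i; rewrite !inE ?negbK.
Qed.

Lemma final_sum n (p : C) (A : {set pauli n}) :
  \sum_E (E \in A)%:R * qw n p (weight E) =
  \sum_(w < n.+1) #|[set P in A | weight P == w]|%:R * qw n p w.
Proof.
have hw : forall P : pauli n, (weight P < n.+1)%N.
  by move=> P; rewrite ltnS /weight; apply: (leq_trans (max_card _)); rewrite card_ord.
transitivity (\sum_(E in A) qw n p (weight E)).
  by rewrite [RHS]big_mkcond; apply: eq_bigr => E _; case: (E \in A); rewrite ?mul1r ?mul0r.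
rewrite (partition_big (fun P => (inord (weight P) : 'I_n.+1)) predT) //=.
apply: eq_bigr => w _.
rewrite -sum1_card natr_sum mulr_suml.
apply: eq_big => P.
  rewrite inE; congr (_ && _).
  by rewrite -(inj_eq val_inj) /= inordK.
move=> /andP [_ /eqP <-]; rewrite mul1r inordK //.
Qed.
End Fin.


Lemma projA_emb (C : numClosedFieldType) k r (a : qb r) :
  projA C k a *m emb C k r = (a == qzero r)%:R *: 1%:M.
Proof.
apply/matrixP=> i j; rewrite !mxE.
under eq_bigr do rewrite /projA /emb /mk !mxE.
rewrite (@sum_enumv _ (In k r) (fun x => (((x.1 == enum_val i) && (x.2 == a))%:R *
   ((x.1 == enum_val j) && (x.2 == qzero r))%:R))).
rewrite (bigD1 (enum_val i, a)) //= big1 => [|[x1 x2] hx]; last first.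
  move: hx; rewrite /= xpair_eqE.
  by case: (x1 == enum_val i); case: (x2 == a); rewrite /= ?mul0r.
rewrite !eqxx mul1r addr0 (inj_eq enum_val_inj).
by case: (i == j); case: (a == qzero r); rewrite /= ?andbF ?mulr1 ?mulr0.
Qed.

Section Main.
Variable C : numClosedFieldType.
Variables (n k c : nat) (p : C) (gp : 'I_(n - k) -> bool * pauli n)
  (hp : 'I_c -> bool * pauli n)
  (U : 'M[C]_(#|qb (n + c)|, #|In k (n - k + c)|)) (Ef : synd n k c -> pauli n).
Hypothesis Hkn : (k <= n)%N.
Hypothesis Hc : (c <= n - k)%N.
Hypothesis Hp0 : 0 <= p.
Hypothesis Hp1 : p <= 1.
Hypothesis Hgg : forall i j : 'I_(n - k), ~~ anticomm (gp i).2 (gp j).2.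
Hypothesis Hgh : forall (i : 'I_(n - k)) (j : 'I_c),
      anticomm (gp i).2 (hp j).2 = (val i == val j).
Hypothesis Hind : forall (A : {set 'I_(n - k)}) (B : {set 'I_c}),
      pmul (pprod (fun i => (gp i).2) A) (pprod (fun j => (hp j).2) B) = pid n ->
      A = set0 /\ B = set0.
Hypothesis HU : unitary U.
Hypothesis Hstab : forall j : gidx n k c,
      smat C (S_gen gp hp j) *m (U *m emb C k (n - k + c)) = U *m emb C k (n - k + c).
Hypothesis HEf : forall s : synd n k c, syndrome gp hp (Ef s) = s.

Local Notation alpha E := (\prod_i sqrtC (dep_w p (E i))).
Local Notation PM E := (pmat C (pcat E (pid c))).

Lemma kraus_reduce E s a :
  projA C k a *m adj U *m PM (Ef s) *m synproj C gp hp s *m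
    depAB c p E *m U *m emb C k (n - k + c) =
  alpha E *: (projA C k a *m adj U *m (PM (Ef s) *m (synproj C gp hp s *m (PM E *m V U)))).
Proof.
rewrite /code_kraus /depAB /V -!mulmxA -scalemxAl -!scalemxAr.
by [].
Qed.

Lemma G_PEV E j :
  G C gp hp j *m (PM E *m V U) = (-1) ^+ syndrome gp hp E j *: (PM E *m V U).
Proof.
rewrite mulmxA (G_pmat C gp hp) -scalemxAl -mulmxA Hstab.
by have := anticomm_EI gp hp E j; rewrite /EI => ->; rewrite ffunE.
Qed.

Lemma syn_pmatV E s :
  synproj C gp hp s *m (PM E *m V U) = (s == syndrome gp hp E)%:R *: (PM E *m V U).
Proof. by apply: synproj_eig => j; exact: G_PEV. Qed.

Lemma Y_fix E :
  Pi0 C gp hp *m (PM (Ef (syndrome gp hp E)) *m (PM E *m V U)) =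
  PM (Ef (syndrome gp hp E)) *m (PM E *m V U).
Proof.
rewrite /Pi0 (synproj_eig (b := z0 n k c)) ?eqxx ?scale1r // => j.
rewrite mulmxA (G_pmat C gp hp) -scalemxAl -mulmxA G_PEV -scalemxAr scalerA.
have := anticomm_EI gp hp (Ef (syndrome gp hp E)) j; rewrite /EI => ->.
have := HEf (syndrome gp hp E); rewrite /syndrome => /ffunP /(_ j).
rewrite !ffunE => ->.
by rewrite -signr_addb addbb.
Qed.


Lemma trK_good E a :
  \tr (projA C k a *m adj U *m PM (Ef (syndrome gp hp E)) *m
    synproj C gp hp (syndrome gp hp E) *m
    depAB c p E *m U *m emb C k (n - k + c)) =
  alpha E * ((a == qzero _)%:R *
    \tr (adj (V U) *m (PM (Ef (syndrome gp hp E)) *m (PM E *m V U)))).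
Proof.
rewrite kraus_reduce syn_pmatV eqxx scale1r.
rewrite -[in LHS]Y_fix (Pi0_eq Hkn Hind HU Hstab) -mulmxA.
rewrite -(mulmxA (V U)) (mulmxA (adj U)) (UadjV HU) mulmxA projA_emb.
by rewrite -scalemxAl mul1mx !mxtraceZ.
Qed.

Lemma trL E :
  `|\tr (adj (V U) *m (PM (Ef (syndrome gp hp E)) *m (PM E *m V U)))| =
  (E \in TxSI gp Ef)%:R * 2%:R ^+ k.
Proof.
rewrite (mulmxA (PM _)) mxtrace_mulC -[_ *m V U *m _]mulmxA -(Pi0_eq Hkn Hind HU Hstab).
rewrite (tr_QPi0 Hkn Hind (ph_mul (ph_pmat _ _) (ph_pmat _ _))).
by rewrite pcat_mul pmulPP (exists_Pf_SI gp hp Hc) (TxSI_mem Hgg Hgh HEf).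
Qed.

Lemma sum_sa E :
  \sum_s \sum_a `|\tr (code_kraus p gp hp U Ef (E, s, a))| ^+ 2 =
  qw n p (weight E) * (E \in TxSI gp Ef)%:R * (2%:R ^+ k) ^+ 2.
Proof.
set K := code_kraus p gp hp U Ef.
rewrite (bigD1 (syndrome gp hp E)) //= [X in _ + X]big1 ?addr0; last first.
  move=> s hs; apply: big1 => a _; rewrite /K.
  by rewrite kraus_reduce syn_pmatV (negbTE hs) scale0r !mulmx0 scaler0 linear0 normr0 expr0n.
rewrite (bigD1 (qzero _)) //= big1 ?addr0; last first.
  by move=> a /negbTE ha; rewrite /K trK_good ha mul0r mulr0 normr0 expr0n.
rewrite /K trK_good eqxx mul1r normrM exprMn trL (alpha_norm E Hp0 Hp1) exprMn.
by rewrite mulrA; case: (E \in TxSI gp Ef); rewrite ?expr1n ?expr0n.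
Qed.
End Main.

Lemma sum_triple (C : numClosedFieldType) (A B D : finType) (F : A * B * D -> C) :
  \sum_x F x = \sum_a \sum_b \sum_d F (a, b, d).
Proof.
rewrite (pair_bigA _ (fun a b => \sum_d F (a, b, d))) /=.
rewrite (pair_bigA _ (fun ab d => F (ab.1, ab.2, d))) /=.
by apply: eq_bigr => -[[a b] d].
Qed.

Unset Implicit Arguments. Set Strict Implicit. Set Printing Implicit Defensive.

Theorem corollary1 (C : numClosedFieldType) (n k c : nat) (p : C)
    (gp : 'I_(n - k) -> bool * pauli n)   (* signed g'_1, ..., g'_{n-k} *)
    (hp : 'I_c -> bool * pauli n)         (* signed h'_1, ..., h'_c *)
    (U : 'M[C]_(#|qb (n + c)|, #|In k (n - k + c)|))   (* encoder U_E *)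
    (Ef : synd n k c -> pauli n) :        (* s |-> E_s, so T = {E_s (x) I} *)
  (k <= n)%N -> (c <= n - k)%N ->
  0 <= p -> p <= 1 ->
  (* commutation relations of the generators of S' *)
  (forall i j : 'I_(n - k), ~~ anticomm (gp i).2 (gp j).2) ->
  (forall i j : 'I_c, ~~ anticomm (hp i).2 (hp j).2) ->
  (forall (i : 'I_(n - k)) (j : 'I_c),
      anticomm (gp i).2 (hp j).2 = (val i == val j)) ->
  (* the n - k + c generators of S' are independent *)
  (forall (A : {set 'I_(n - k)}) (B : {set 'I_c}),
      pmul (pprod (fun i => (gp i).2) A) (pprod (fun j => (hp j).2) B) = pid n ->
      A = set0 /\ B = set0) ->
  (* U_E is a Clifford unitary and the encoded states are stabilized by S *)
  unitary U -> clifford U ->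
  (forall j : gidx n k c,
      smat C (S_gen gp hp j) *m (U *m emb C k (n - k + c)) = U *m emb C k (n - k + c)) ->
  (* T: one representative of each syndrome, E_0 = I *)
  Ef [ffun => false] = pid n ->
  (forall s : synd n k c, syndrome gp hp (Ef s) = s) ->
  chan_fid (code_kraus p gp hp U Ef)
    = \sum_(w < n.+1) (bw gp Ef w)%:R * qw n p w.
Proof.
move=> Hkn Hc Hp0 Hp1 Hgg Hhh Hgh Hind HU _ Hstab _ HEf.
rewrite /chan_fid sum_triple.
under eq_bigr => E _ do rewrite (sum_sa Hkn Hc Hp0 Hp1 Hgg Hgh Hind HU Hstab HEf E).
rewrite -mulr_suml mulrCA card_qb mulVf ?mulr1; last by rewrite expf_neq0 // expf_neq0 // two_ne0.
rewrite -(final_sum p (TxSI gp Ef)).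
by apply: eq_bigr => E _; rewrite mulrC.
Qed.
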